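(* BCP does not hold on $\mathbb H$ for the box-distance $d_\infty(p,q)=\|p^{-1}\cdot q\|_\infty$, where $\|(x,y,z)\|_\infty=\max\big((x^2+y^2)^{1/2},\,2|z|^{1/2}\big)$.
   Context: $\mathbb H=\mathbb R^3$ with group law $(x,y,z)\cdot(x',y',z')=(x+x',y+y',z+z'+\tfrac12(xy'-yx'))$; $d_\infty$ is a homogeneous (left invariant, dilation-homogeneous, topology-inducing) distance. BCP holds for $d$ if there is $N\geq1$ such that for every bounded $A$ and every family $\mathcal B$ of closed balls with each point of $A$ the center of some ball of $\mathcal B$, some subfamily $\mathcal F\subset\mathcal B$ satisfies $\chi_A\le\sum_{B\in\mathcal F}\chi_B\le N$. *)

(* Defs.v *)
From Stdlib Require Import Reals List.
Open Scope R_scope.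

Definition H : Type := (R * R * R)%type.

Definition hmul (p q : H) : H :=
  match p, q with
  | (x, y, z), (x', y', z') =>
      (x + x', y + y', z + z' + / 2 * (x * y' - y * x'))
  end.

Definition hinv (p : H) : H :=
  match p with (x, y, z) => (- x, - y, - z) end.

Definition boxnorm (p : H) : R :=
  match p with (x, y, z) => Rmax (sqrt (x ^ 2 + y ^ 2)) (2 * sqrt (Rabs z)) end.

Definition dinf (p q : H) : R := boxnorm (hmul (hinv p) q).

Definition cball (d : H -> H -> R) (c : H) (r : R) : H -> Prop :=
  fun q => d c q <= r.

Definition is_cball (d : H -> H -> R) (B : H -> Prop) : Prop :=
  exists c r, 0 < r /\ B = cball d c r.

Definition bounded (d : H -> H -> R) (A : H -> Prop) : Prop :=
  exists c M, forall a, A a -> d c a <= M.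

(* Besicovitch covering property: there is N >= 1 such that for every
   bounded A and every family Bf of closed balls such that every point of A
   is the center of some ball of Bf, there is a subfamily F of Bf with
   chi_A <= sum_{B in F} chi_B <= N, i.e. F covers A and every point
   belongs to at most N (distinct) balls of F. *)
Definition BCP (d : H -> H -> R) : Prop :=
  exists N : nat, (1 <= N)%nat /\
  forall (A : H -> Prop) (Bf : (H -> Prop) -> Prop),
    bounded d A ->
    (forall B, Bf B -> is_cball d B) ->
    (forall a, A a -> exists r, 0 < r /\ Bf (cball d a r)) ->
    exists F : (H -> Prop) -> Prop,
      (forall B, F B -> Bf B) /\
      (forall a, A a -> exists B, F B /\ B a) /\
      (forall (p : H) (l : list (H -> Prop)),
         NoDup l -> (forall B, In B l -> F B /\ B p) -> (length l <= N)%nat).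

(* Main.v *)
Require Import Defs.
From Stdlib Require Import Reals List.
From Stdlib Require Import Lra Lia Psatz FinFun.
Open Scope R_scope.

Fixpoint xs (n : nat) : R :=
  match n with O => 2 | S k => xs k ^ 2 + 1 end.

Definition pt (k : nat) : H := (xs k, 1, (xs k ^ 2 + 1) / 4).
Definition rad (k : nat) : R := sqrt (xs k ^ 2 + 1).
Definition ball (k : nat) : H -> Prop := cball dinf (pt k) (rad k).

Lemma xs_ge2 n : 2 <= xs n.
Proof. induction n; simpl; nra. Qed.

Lemma xs_mono k m : (k <= m)%nat -> xs k <= xs m.
Proof.
  induction 1; [lra|]. simpl. pose proof (xs_ge2 m). nra.
Qed.

Lemma xs_big k m : (k < m)%nat -> xs k ^ 2 + 1 <= xs m.
Proof. intro H0. apply (xs_mono (S k) m H0). Qed.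

Lemma two_sqrt y : 0 <= y -> 2 * sqrt y = sqrt (4 * y).
Proof.
  intro Hy. rewrite sqrt_mult by lra.
  replace 4 with (2*2) by lra. rewrite sqrt_square by lra. reflexivity.
Qed.

Lemma bn_le a b c Rr : a ^ 2 + b ^ 2 <= Rr -> 4 * Rabs c <= Rr ->
  boxnorm (a, b, c) <= sqrt Rr.
Proof.
  intros H1 H2. unfold boxnorm. apply Rmax_lub.
  - apply sqrt_le_1_alt; lra.
  - rewrite two_sqrt by apply Rabs_pos. apply sqrt_le_1_alt; lra.
Qed.

Lemma bn_gt a b c Rr : 0 <= Rr -> Rr < 4 * Rabs c -> sqrt Rr < boxnorm (a, b, c).
Proof.
  intros H1 H2. unfold boxnorm. eapply Rlt_le_trans; [|apply Rmax_r].
  rewrite two_sqrt by apply Rabs_pos. apply sqrt_lt_1_alt; lra.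
Qed.

Lemma rad_pos k : 0 < rad k.
Proof. unfold rad. apply sqrt_lt_R0. nra. Qed.

Lemma key k m : k <> m -> rad m < dinf (pt m) (pt k).
Proof.
  intro Hne. unfold dinf, pt, rad; cbn [hmul hinv].
  pose proof (xs_ge2 k). pose proof (xs_ge2 m).
  apply bn_gt; [nra|].
  destruct (Nat.lt_gt_cases k m) as [[Hl|Hl] _]; [exact Hne| |].
  - pose proof (xs_big _ _ Hl).
    rewrite Rabs_left; nra.
  - pose proof (xs_big _ _ Hl).
    rewrite Rabs_right; nra.
Qed.

Lemma self k : ball k (pt k).
Proof.
  unfold ball, cball, dinf, pt. cbn [hmul hinv].
  apply bn_le.
  - nra.
  - replace (- ((xs k ^ 2 + 1) / 4) + (xs k ^ 2 + 1) / 4 + / 2 * (- xs k * 1 - - (1) * xs k)) with 0 by field.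
    rewrite Rabs_R0. nra.
Qed.

Lemma center k : ball k (0, 0, 0).
Proof.
  unfold ball, cball, dinf, pt. cbn [hmul hinv].
  apply bn_le.
  - nra.
  - rewrite Rabs_left1; [| pose proof (xs_ge2 k); nra]. nra.
Qed.

Lemma ball_inj : Injective ball.
Proof.
  intros k m E. destruct (Nat.eq_dec k m) as [|Hn]; auto. exfalso.
  pose proof (self k) as S. rewrite E in S. unfold ball, cball in S.
  pose proof (key k m Hn). lra.
Qed.

Theorem mainTheorem5 : ~ BCP dinf.
Proof.
  intros [N [HN Hb]].
  destruct (Hb (fun q => exists k, (k <= N)%nat /\ q = pt k)
               (fun B => exists k, (k <= N)%nat /\ B = ball k))
    as [F [HF1 [HF2 HF3]]].
  - exists (0,0,0), (rad N). intros a [k [Hk ->]].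
    unfold dinf, pt, rad. cbn [hmul hinv]. apply bn_le.
    + pose proof (xs_mono _ _ Hk). pose proof (xs_ge2 k). nra.
    + pose proof (xs_mono _ _ Hk). pose proof (xs_ge2 k).
      rewrite Rabs_right; nra.
  - intros B [k [_ ->]]. exists (pt k), (rad k). split; [apply rad_pos|reflexivity].
  - intros a [k [Hk ->]]. exists (rad k). split; [apply rad_pos|]. exists k; auto.
  - assert (Fk : forall k, (k <= N)%nat -> F (ball k)).
    { intros k Hk. destruct (HF2 (pt k)) as [B [FB Bk]]; [exists k; auto|].
      destruct (HF1 B FB) as [m [_ Em]]. subst B.
      destruct (Nat.eq_dec m k) as [->|Hn]; auto. exfalso.
      unfold ball, cball in Bk. pose proof (key k m (not_eq_sym Hn)). lra. }
    specialize (HF3 (0,0,0) (map ball (seq 0 (S N)))).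
    rewrite length_map, length_seq in HF3.
    assert (S N <= N)%nat; [|lia].
    apply HF3.
    + apply Injective_map_NoDup; [apply ball_inj | apply seq_NoDup].
    + intros B HB. apply in_map_iff in HB. destruct HB as [k [<- Hk]].
      apply in_seq in Hk. split; [apply Fk; lia | apply center].
Qed.
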